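(* For all integers $n\ge 2$ and $b\ge 1$, the circulant graph $G_{nb,b}$ satisfies $\operatorname{box}(G_{nb,b})\le\chi(G_{nb,b})$.
   Context: For integers $a\ge 2b\ge 2$, $G_{a,b}$ is the graph with vertex set $\{0,1,\ldots,a-1\}$ in which distinct $u,v$ are adjacent if and only if $u\in\{v+b,v+b+1,\ldots,v+a-b\}$ with addition modulo $a$. The boxicity $\operatorname{box}(G)$ is the minimum nonnegative integer $k$ such that $G$ is isomorphic to the intersection graph of a family of boxes (Cartesian products of $k$ closed real intervals) in $\mathbb{R}^k$. $\chi(G)$ is the chromatic number. *)

(* Defs.v *)
From HB Require Import structures.
From mathcomp Require Import all_boot.
From Stdlib Require Reals.
Set Implicit Arguments. Unset Strict Implicit. Unset Printing Implicit Defensive.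

Notation Real := Stdlib.Reals.Rdefinitions.R.
Notation Rle := Stdlib.Reals.Rdefinitions.Rle.

(* The circulant graph G_{a,b} on {0,...,a-1}: u ~ v iff u <> v and
   u = v + t (mod a) for some t in {b,...,a-b}, i.e. (u - v) mod a in [b, a-b]. *)
Definition circ_adj (a b : nat) : rel 'I_a :=
  fun u v => (u != v) && (b <= (u + a - v) %% a <= a - b).
Arguments circ_adj : clear implicits.

Definition colorable (V : finType) (e : rel V) (k : nat) : Prop :=
  exists f : V -> 'I_k, forall u v : V, e u v -> f u != f v.

Definition is_chromatic_number (V : finType) (e : rel V) (k : nat) : Prop :=
  colorable e k /\ forall j, colorable e j -> k <= j.

(* Box representation in R^k: vertex v gets the box
   prod_{i<k} [lo v i, hi v i]; two boxes intersect iff every coordinate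
   interval pair intersects. *)
Definition box_rep (V : finType) (e : rel V) (k : nat) : Prop :=
  exists lo hi : V -> nat -> Real,
    (forall v i, i < k -> Rle (lo v i) (hi v i)) /\
    (forall u v : V, u != v ->
       (e u v <-> forall i, i < k -> Rle (lo u i) (hi v i) /\ Rle (lo v i) (hi u i))).

Definition is_boxicity (V : finType) (e : rel V) (k : nat) : Prop :=
  box_rep e k /\ forall j, box_rep e j -> k <= j.

(* Main.v *)
Require Import Defs.
From mathcomp Require Import all_boot zify.
From Stdlib Require Import Reals Classical.
Set Implicit Arguments. Unset Strict Implicit. Unset Printing Implicit Defensive.

Definition loN (q r i : nat) := if q == i then r.+1 else 0.
Definition hiN (m b q r i : nat) := if q == i then r.+1 else if q == m then r.+1 else b.+1.
Definition ovN m b qu ru qv rv i :=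
  (loN qu ru i <= hiN m b qv rv i) && (loN qv rv i <= hiN m b qu ru i).
Definition DN a u v := if v <= u then u - v else u + a - v.

Lemma succmod n i : 2 <= n -> i < n ->
  (i.+1 < n /\ i.+1 %% n = i.+1) \/ (i = n.-1 /\ i.+1 %% n = 0).
Proof.
move=> hn hi; case: (ltnP i.+1 n) => h.
  by left; split => //; rewrite modn_small.
right; have e : i.+1 = n by lia.
by rewrite e modnn; split => //; lia.
Qed.

Lemma core_fwd n b qu ru qv rv i : 2 <= n -> 1 <= b -> qu < n -> qv < n -> ru < b -> rv < b ->
  i < n ->
  qu*b+ru != qv*b+rv -> b <= DN (n*b) (qu*b+ru) (qv*b+rv) <= n*b - b ->
  ovN (i.+1 %% n) b qu ru qv rv i.
Proof.
move=> hn hb hqu hqv hru hrv hi.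
have := succmod hn hi; move: (i.+1 %% n) => m hm.
rewrite /ovN /loN /hiN /DN.
do ! case: ifPn => /eqP ? ; try case: ifPn => ?; nia.
Qed.
Lemma core_bwd n b qu ru qv rv : 2 <= n -> 1 <= b -> qu < n -> qv < n -> ru < b -> rv < b ->
  qu*b+ru != qv*b+rv ->
  ovN (qu.+1 %% n) b qu ru qv rv qu -> ovN (qv.+1 %% n) b qu ru qv rv qv ->
  b <= DN (n*b) (qu*b+ru) (qv*b+rv) <= n*b - b.
Proof.
move=> hn hb hqu hqv hru hrv.
have := succmod hn hqu; move: (qu.+1 %% n) => m1 hm1.
have := succmod hn hqv; move: (qv.+1 %% n) => m2 hm2.
rewrite /ovN /loN /hiN /DN.
do ! case: ifPn => /eqP ? ; try case: ifPn => ?; nia.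
Qed.

Lemma modD a u v : u < a -> v < a -> (u + a - v) %% a = DN a u v.
Proof.
move=> hu hv; rewrite /DN; case: leqP => h.
  have -> : u + a - v = (u - v) + a by lia.
  by rewrite modnDr modn_small //; lia.
by rewrite modn_small //; lia.
Qed.

Lemma minP (P : nat -> Prop) m : P m -> exists k, [/\ P k, forall j, P j -> k <= j & k <= m].
Proof.
elim: m {-2}m (leqnn m) => [|m IH] k hk Pk.
  exists k; split => //; lia.
destruct (classic (exists j, j < k /\ P j)) as [[j [hj Pj]]|H].
  have [k' [Pk' mk' le']] := IH j ltac:(lia) Pj.
  exists k'; split => //; lia.
exists k; split => // j Pj; case: (leqP k j) => // hj.
by exfalso; apply: H; exists j.
Qed.

Lemma decomp n b (v : 'I_(n*b)) : 1 <= b ->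
  [/\ nat_of_ord v = v %/ b * b + v %% b, v %% b < b & v %/ b < n].
Proof.
move=> hb; split; first exact: divn_eq.
  by rewrite ltn_pmod.
by rewrite ltn_divLR // ltn_ord.
Qed.

Lemma adjE n b (u v : 'I_(n*b)) :
  circ_adj (n*b) b u v = (nat_of_ord u != v) && (b <= DN (n*b) u v <= n*b - b).
Proof. by rewrite /circ_adj modD. Qed.

Theorem theorem4p1 (n b : nat) (hn : 2 <= n) (hb : 1 <= b) :
  exists bx chi : nat,
    [/\ is_boxicity (circ_adj (n * b) b) bx,
        is_chromatic_number (circ_adj (n * b) b) chi
      & bx <= chi].
Proof.
have Hbox : box_rep (circ_adj (n * b) b) n.
  exists (fun (v : 'I_(n*b)) j => INR (loN (v %/ b) (v %% b) j)).
  exists (fun (v : 'I_(n*b)) j => INR (hiN (j.+1 %% n) b (v %/ b) (v %% b) j)).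
  split.
    move=> v i _; apply: le_INR; apply/leP; rewrite /loN /hiN.
    by case: ifP.
  move=> u v huv.
  have [eu ru qu] := decomp u hb; have [ev rv qv] := decomp v hb.
  have huv' : (u %/ b * b + u %% b != v %/ b * b + v %% b).
    by rewrite -eu -ev.
  have -> : circ_adj (n*b) b u v = (b <= DN (n*b) (u %/ b * b + u %% b) (v %/ b * b + v %% b) <= n * b - b).
    by rewrite adjE -eu -ev (huv : (nat_of_ord u != v)).
  split.
    move=> H i hi.
    have := core_fwd hn hb qu qv ru rv hi huv' H.
    by case/andP => /leP h1 /leP h2; split; apply: le_INR.
  move=> H.
  have ov : forall i, i < n -> ovN (i.+1 %% n) b (u %/ b) (u %% b) (v %/ b) (v %% b) i.
    move=> i hi; have [h1 h2] := H i hi.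
    by apply/andP; split; apply/leP; apply: INR_le.
  exact: core_bwd hn hb qu qv ru rv huv' (ov _ qu) (ov _ qv).
have Hcol : colorable (circ_adj (n * b) b) n.
  have hq : forall v : 'I_(n*b), v %/ b < n.
    by move=> v; have [] := decomp v hb.
  exists (fun v => Ordinal (hq v)).
  move=> u v; rewrite adjE => /andP [_ H]; apply/negP => /eqP [] e.
  have [eu ru qu] := decomp u hb; have [ev rv qv] := decomp v hb.
  move: H; rewrite eu ev e /DN.
  case: ifPn => ? ; nia.
have Hlow : forall j, colorable (circ_adj (n * b) b) j -> n <= j.
  move=> j [g Hg].
  have hv : forall i : 'I_n, i * b < n * b.
    by move=> i; rewrite ltn_pmul2r // ltn_ord.
  pose h := fun i : 'I_n => g (Ordinal (hv i)).
  have inj : injective h.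
    move=> i1 i2 e; apply/eqP; apply/negPn/negP => ne.
    suff : circ_adj (n*b) b (Ordinal (hv i1)) (Ordinal (hv i2)).
      by move/Hg; rewrite /h in e; rewrite e eqxx.
    rewrite adjE /=.
    have ne' : (i1 : nat) != i2 by [].
    have h1 := ltn_ord i1; have h2 := ltn_ord i2.
    rewrite /DN; case: ifPn => ?; apply/andP; split; nia.
  by have := leq_card h inj; rewrite !card_ord.
have [bx [P1 P2 P3]] := minP Hbox.
exists bx, n; split => //.
Qed.
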